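(* Let $\gamma=(\gamma_1,\dots,\gamma_b)$ be a parallel map on $V=V_1\oplus\cdots\oplus V_b$, $V_i\cong(\mathbb F_2)^m$ with $m\ge4$, and $0\gamma=0$. Suppose every $\gamma_i$ is differentially $4$-uniform and satisfies $\hat n(\gamma_i)=0$. If $\gamma$ maps $\mathcal{LA}_U(W_1|W_2)$ onto a non-trivial partition $\mathcal{LA}_{U'}(W_1'|W_2')$, where $J_U\cap J_{U'}=\emptyset$, then $W_1,W_2,W_1',W_2'$ are walls and $W_1=W_1'=W_2=W_2'$; in particular both partitions are linear.
   Context: Let $b>1$, $n=mb$, $V=(\mathbb F_2)^n=V_1\oplus\cdots\oplus V_b$, $V_i\cong(\mathbb F_2)^m$. Permutations act on the right. A parallel map is $\gamma\in\mathrm{Sym}(V)$ with $(v_1\oplus\cdots\oplus v_b)\gamma=v_1\gamma_1\oplus\cdots\oplus v_b\gamma_b$, $\gamma_i\in\mathrm{Sym}(V_i)$. A wall is $\bigoplus_{i\in I}V_i$ with $\emptyset\ne I\subsetneq\{1,\dots,b\}$. For a subspace $U$ of dimension $n-1$, $J_U=\{j:V_j\cap U\subsetneq V_j\}$. For $f:(\mathbb F_2)^m\to(\mathbb F_2)^m$, $\hat f_a(x)=f(x+a)+f(x)$; $f$ is differentially $\delta$-uniform if $\delta=\max_{a\ne0,b}|\{x:\hat f_a(x)=b\}|$; $\hat n(f)=\max_{a\ne0}|\{v\ne0: x\mapsto\langle\hat f_a(x),v\rangle\text{ is constant}\}|$ with $\langle\cdot,\cdot\rangle$ the standard dot product. A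 permutation maps $\mathcal A$ onto $\mathcal B$ if it sends the blocks of $\mathcal A$ exactly onto those of $\mathcal B$; trivial partitions are the singleton partition and $\{V\}$. $\mathcal L(W)=\{W+v:v\in V\}$ (linear partition). For subspaces $W_1,W_2\subseteq U$, $\mathcal{LA}_U(W_1|W_2)=\{W_1+v:v\in U\}\cup\{(W_2+\bar v)+v:v\in U\}$ for any $\bar v\in V\setminus U$. *)

(* Defs.v *)
From HB Require Import structures.
From mathcomp Require Import all_boot all_order all_algebra all_fingroup all_field.
Set Implicit Arguments. Unset Strict Implicit. Unset Printing Implicit Defensive.
Import GRing.Theory.
Local Open Scope ring_scope.

Notation blk m := ('rV['F_2]_m) (only parsing).
Notation Vsp b m := {ffun 'I_b -> 'rV['F_2]_m} (only parsing).

Definition parmap (b m : nat) (g : 'I_b -> {perm 'rV['F_2]_m}) (x : Vsp b m) : Vsp b m :=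
  [ffun i => g i (x i)].

Definition dotp (m : nat) (u v : 'rV['F_2]_m) : 'F_2 := \sum_(i < m) u 0 i * v 0 i.

Definition fder (m : nat) (f : 'rV['F_2]_m -> 'rV['F_2]_m) (a x : 'rV['F_2]_m) :=
  f (x + a) + f x.

Definition diff_unif (m : nat) (f : 'rV['F_2]_m -> 'rV['F_2]_m) : nat :=
  (\max_(a : 'rV['F_2]_m | a != 0%R) \max_(c : 'rV['F_2]_m)
     #|[set x : 'rV['F_2]_m | fder f a x == c]|)%N.

Definition diff_delta_uniform (m : nat) (f : 'rV['F_2]_m -> 'rV['F_2]_m) (delta : nat) :=
  diff_unif f = delta.

Definition nhat (m : nat) (f : 'rV['F_2]_m -> 'rV['F_2]_m) : nat :=
  (\max_(a : 'rV['F_2]_m | a != 0%R)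
     #|[set v : 'rV['F_2]_m | (v != 0%R) &&
         [forall x, forall y, dotp (fder f a x) v == dotp (fder f a y) v]]|)%N.

Definition inj_blk (b m : nat) (j : 'I_b) (v : 'rV['F_2]_m) : Vsp b m :=
  [ffun i => if i == j then v else 0].

Definition Jset (b m : nat) (U : {vspace Vsp b m}) : {set 'I_b} :=
  [set j | [exists v : 'rV['F_2]_m, inj_blk j v \notin U]].

Definition wall_set (b m : nat) (I : {set 'I_b}) : {set Vsp b m} :=
  [set x : Vsp b m | [forall i, (i \notin I) ==> (x i == 0%R)]].

Definition is_wall (b m : nat) (W : {vspace Vsp b m}) : Prop :=
  exists I : {set 'I_b}, [/\ I != set0, I != setT &
     [set x : Vsp b m | x \in W] = wall_set m I].

Definition coset (b m : nat) (W : {vspace Vsp b m}) (v : Vsp b m) : {set Vsp b m} :=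
  [set (w : Vsp b m) + v | w in [set x : Vsp b m | x \in W]].

Definition linpart (b m : nat) (W : {vspace Vsp b m}) : {set {set Vsp b m}} :=
  [set coset W v | v : Vsp b m].

(* LA_U(W1|W2), given vbar in V \ U *)
Definition LApart (b m : nat) (U W1 W2 : {vspace Vsp b m}) (vbar : Vsp b m)
  : {set {set Vsp b m}} :=
  [set coset W1 v | v in [set x : Vsp b m | x \in U]] :|:
  [set coset W2 (vbar + v) | v in [set x : Vsp b m | x \in U]].

Definition maps_onto (T : finType) (f : T -> T) (A B : {set {set T}}) : Prop :=
  [set f @: (X : {set T}) | X in A] = B.

Definition trivial_part (T : finType) (A : {set {set T}}) : Prop :=
  A = [set [set x] | x : T] \/ A = [set [set: T]].

(* Main.v *)
Require Import Defs.
From HB Require Import structures.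
From mathcomp Require Import all_boot all_order all_algebra all_fingroup all_field.
Import GRing.Theory.
Local Open Scope ring_scope.
From mathcomp Require Import zify.
Import Defs.

Module Aux.
Set Implicit Arguments. Unset Strict Implicit.

Lemma F2_cases (x : 'F_2) : x = 0 \/ x = 1.
Proof. case: x => [[|[|]]] //= ?; [left|right]; exact/val_inj. Qed.

Lemma F2_11 : (1 + 1 : 'F_2) = 0. Proof. exact/val_inj. Qed.

Lemma addxxF (x : 'F_2) : x + x = 0.
Proof. by case: (F2_cases x) => ->; rewrite ?addr0 ?F2_11. Qed.

Lemma addxx {V : lmodType 'F_2} (x : V) : x + x = 0.
Proof. by rewrite -{1 2}[x]scale1r -scalerDl F2_11 scale0r. Qed.

Lemma oppF2 {V : lmodType 'F_2} (x : V) : - x = x.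
Proof. by rewrite -[LHS]addr0 -(addxx x) addrA addNr add0r. Qed.

Lemma addKx {V : lmodType 'F_2} (x y : V) : x + (x + y) = y.
Proof. by rewrite addrA addxx add0r. Qed.

Lemma addxK {V : lmodType 'F_2} (x y : V) : (y + x) + x = y.
Proof. by rewrite -addrA addxx addr0. Qed.

Lemma lin_dotp m (l : 'rV['F_2]_m -> 'F_2) :
  (forall x y, l (x + y) = l x + l y) -> forall y, l y = dotp y (\row_k l 'e_k).
Proof.
move=> lD y.
have l0 : l 0 = 0.
  by have := lD 0 0; rewrite addr0 => h; rewrite {1}h addxxF.
rewrite {1}(row_sum_delta y) /dotp.
rewrite (big_morph l lD l0); apply: eq_bigr => k _; rewrite mxE.
by case: (F2_cases (y 0 k)) => ->; rewrite ?scale0r ?l0 ?mul0r ?scale1r ?mul1r.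
Qed.

Lemma dotpDl m (u u' v : 'rV['F_2]_m) : dotp (u + u') v = dotp u v + dotp u' v.
Proof. by rewrite /dotp -big_split; apply: eq_bigr => k _; rewrite mxE mulrDl. Qed.

Lemma dotp0r m (u : 'rV['F_2]_m) : dotp u 0 = 0.
Proof. by rewrite /dotp big1 // => k _; rewrite mxE mulr0. Qed.

Lemma annih m (Z : {set 'rV['F_2]_m}) w :
  0 \in Z -> (forall x y, x \in Z -> y \in Z -> x + y \in Z) -> w \notin Z ->
  exists v, v != 0 /\ forall z, z \in Z -> dotp z v = 0.
Proof.
move=> Z0 ZD wZ.
pose P (M : {set 'rV['F_2]_m}) :=
  [&& Z \subset M, w \notin M & [forall x in M, forall y in M, x + y \in M]].
have PZ : P Z.
  rewrite /P subxx wZ /=; apply/forall_inP => x xZ; apply/forall_inP => y yZ.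
  exact: ZD.
case: (@arg_maxnP _ Z P (fun M => #|M|) PZ) => M PM Mmax.
case/and3P: PM => ZM wM /forall_inP MD'.
have MD : forall x y, x \in M -> y \in M -> x + y \in M.
  by move=> x y xM yM; have /forall_inP := MD' x xM; apply.
have M0 : 0 \in M by apply: (subsetP ZM).
have Mw : forall y, y \notin M -> y + w \in M.
  move=> y yM; apply/negPn/negP => ywM.
  pose M' := M :|: [set y + x | x in M].
  have memM' : forall z, (z \in M') = (z \in M) || (z + y \in M).
    move=> z; rewrite !inE; congr (_ || _); apply/imsetP/idP.
      by case=> x xM ->; rewrite (addrC y) addxK.
    by move=> h; exists (z + y) => //; rewrite addrC addxK.
  have PM' : P M'.
    apply/and3P; split.
    - by apply: subset_trans ZM _; apply/subsetP => z zM; rewrite memM' zM.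
    - rewrite memM' negb_or wM /=; by rewrite addrC.
    - apply/forall_inP => x; rewrite memM' => xM; apply/forall_inP => z.
      rewrite memM' => zM; rewrite memM'.
      case/orP: xM => xM; case/orP: zM => zM.
      + by rewrite (MD x z xM zM).
      + by rewrite -addrA (MD x _ xM zM) orbT.
      + by rewrite -addrA (addrC z) addrA (MD _ z xM zM) orbT.
      + have -> : x + z = (x + y) + (z + y).
          by rewrite addrACA addxx addr0.
        by rewrite (MD _ _ xM zM).
  have := Mmax M' PM'.
  suff : (#|M| < #|M'|)%N by move=> h1 h2; move: (leq_trans h1 h2); rewrite ltnn.
  apply: proper_card; rewrite properEneq; apply/andP; split.
    apply/eqP => eMM'; move: yM; rewrite eMM' memM' addxx M0 orbT //.
  by apply/subsetP => z zM; rewrite memM' zM.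
pose l (y : 'rV['F_2]_m) : 'F_2 := (y \notin M)%:R.
have lD : forall x y, l (x + y) = l x + l y.
  move=> x y; rewrite /l.
  case xM: (x \in M); case yM: (y \in M) => /=.
  - by rewrite (MD _ _ xM yM) addr0.
  - have -> : x + y \notin M.
      by apply/negP => h; move: yM; rewrite -(addKx x y) (MD _ _ xM h).
    by rewrite add0r.
  - have -> : x + y \notin M.
      by apply/negP => h; move: xM; rewrite -(addxK y x) (MD _ _ h yM).
    by rewrite addr0.
  - have -> : x + y \in M.
      have := MD _ _ (Mw x (negbT xM)) (Mw y (negbT yM)).
      by rewrite addrA (addrC _ y) addrA addxK addrC.
    by rewrite /= F2_11.
exists (\row_k l 'e_k); split.
  apply/negP => /eqP v0.
  have := @lin_dotp _ _ lD w; rewrite v0 dotp0r /l wM => h.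
  by move: h => /eqP; rewrite oner_eq0.
by move=> z zZ; rewrite -(@lin_dotp _ _ lD) /l (subsetP ZM z zZ).
Qed.

Lemma NH m (F : 'rV['F_2]_m -> 'rV['F_2]_m) (Z : {set 'rV['F_2]_m}) w a t0 :
  0 \in Z -> (forall x y, x \in Z -> y \in Z -> x + y \in Z) -> w \notin Z ->
  a != 0 -> (forall t, fder F a t + fder F a t0 \in Z) -> nhat F = 0%N -> False.
Proof.
move=> Z0 ZD wZ a0 hZ hn.
have [v [v0 vZ]] := @annih _ _ _ Z0 ZD wZ.
have key : v \in [set v : 'rV['F_2]_m | (v != 0%R) &&
         [forall x, forall y, dotp (fder F a x) v == dotp (fder F a y) v]].
  rewrite inE v0 /=; apply/forallP => x; apply/forallP => y.
  have ex : forall t, dotp (fder F a t) v = dotp (fder F a t0) v.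
    move=> t; have := vZ _ (hZ t); rewrite dotpDl => h.
    by rewrite -[LHS]addr0 -(addxxF (dotp (fder F a t0) v)) addrA h add0r.
  by rewrite !ex.
have : (0 < nhat F)%N.
  rewrite /nhat.
  have := @leq_bigmax_cond _ (fun a => a != 0) (fun a => #|[set v : 'rV['F_2]_m | (v != 0%R) &&
         [forall x, forall y, dotp (fder F a x) v == dotp (fder F a y) v]]|) a a0.
  apply: leq_trans.
  by rewrite card_gt0; apply/set0Pn; exists v.
by rewrite hn.
Qed.

Lemma DU m (F : 'rV['F_2]_m -> 'rV['F_2]_m) a c :
  a != 0 -> diff_unif F = 4%N -> (#|[set x | fder F a x == c]| <= 4)%N.
Proof.
move=> a0 hd; rewrite -hd /diff_unif.
apply: leq_trans (@leq_bigmax_cond _ (fun a => a != 0) (fun a => (\max_(c : 'rV['F_2]_m)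
     #|[set x : 'rV['F_2]_m | fder F a x == c]|)%N) a a0).
exact: (@leq_bigmax_cond _ xpredT (fun c => #|[set x | fder F a x == c]|) c).
Qed.

Lemma dimV b m : \dim (fullv : {vspace Vsp b m}) = (m * b)%N.
Proof. by rewrite dimvf /dim /= card_ord dim_matrix mul1r mulnC. Qed.

Lemma idx2 b m (U : {vspace Vsp b m}) x y :
  (0 < m * b)%N -> \dim U = (m * b).-1 -> x \notin U -> y \notin U -> x + y \in U.
Proof.
move=> n0 dU xU yU.
have full : (U + <[x]>)%VS = fullv.
  apply/eqP; rewrite eqEdim subvf /= dimV.
  have h := dimv_leqif_sup (addvSl U <[x]>).
  have : (\dim U < \dim (U + <[x]>))%N.
    rewrite (ltn_leqif h); apply/negP => sub.
    have : x \in U.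
      apply: (subvP sub); rewrite -{1}[x]add0r memv_add //; [exact: mem0v | exact: memv_line].
    by rewrite (negbTE xU).
  by rewrite dU; case: (m * b)%N n0.
have : y \in (U + <[x]>)%VS by rewrite full memvf.
case/memv_addP => u uU [c /vlineP [k kc] yE]; subst y c.
case: (F2_cases k) => kE; rewrite kE in yU *.
  by rewrite scale0r addr0 uU in yU.
by rewrite scale1r addrC -addrA addxx addr0.
Qed.

Lemma sgD b m (U : {vspace Vsp b m}) x y :
  (0 < m * b)%N -> \dim U = (m * b).-1 ->
  (x + y \notin U) = (x \notin U) (+) (y \notin U).
Proof.
move=> n0 dU.
case xU: (x \in U); case yU: (y \in U) => /=.
- by rewrite memvD.
- apply/negP => h; move/negP: yU; apply; by rewrite -(addKx x y) memvD.
- apply/negP => h; move/negP: xU; apply; by rewrite -(addxK y x) memvD.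
- by rewrite idx2 // ?xU ?yU.
Qed.

Lemma mem_coset b m (W : {vspace Vsp b m}) c y :
  (y \in coset W c) = (y + c \in W).
Proof.
apply/imsetP/idP.
  by case=> w; rewrite inE => wW ->; rewrite addxK.
by move=> h; exists (y + c); rewrite ?inE // addxK.
Qed.

Lemma coset_eq b m (W : {vspace Vsp b m}) c y :
  y \in coset W c -> coset W c = coset W y.
Proof.
rewrite mem_coset => yc; apply/setP => z; rewrite !mem_coset.
have -> : z + c = (z + y) + (y + c) by rewrite addrA addxK.
by apply/idP/idP => h; [rewrite -(addxK (y + c) (z + y)) | ]; rewrite memvD.
Qed.

Definition Wsel {b m} (W1 W2 : {vspace Vsp b m}) (beta : bool) := if beta then W2 else W1.

Lemma LApartP b m (U W1 W2 : {vspace Vsp b m}) vbar X :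
  (0 < m * b)%N -> \dim U = (m * b).-1 -> vbar \notin U ->
  reflect (exists c, X = coset (Wsel W1 W2 (c \notin U)) c) (X \in LApart U W1 W2 vbar).
Proof.
move=> n0 dU vU; apply: (iffP setUP).
  case; case/imsetP => v; rewrite inE => vinU ->.
    by exists v; rewrite vinU.
  by exists (vbar + v); rewrite sgD // vU vinU.
case=> c ->; case cU: (c \in U) => /=.
  by left; apply/imsetP; exists c; rewrite ?inE.
right; apply/imsetP; exists (vbar + c); rewrite ?inE ?addKx //.
by rewrite idx2 // cU.
Qed.

Lemma ar1 a c N : (a <= c -> c <= a -> a + c = N -> 2 ^ 4 <= N -> 8 <= a)%N.
Proof. move=> *; have : (2 ^ 4 = 16)%N by []. lia. Qed.
Lemma ar2 h d : (8 <= h -> h <= d -> d <= 4 -> False)%N.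
Proof. lia. Qed.
Lemma ar3 h k : (h <= k * 4 -> 8 <= h -> k.+1 * k.+1 <= h -> False)%N.
Proof. nia. Qed.

Unset Implicit Arguments.

Section Main.
Variables (b m : nat) (g : 'I_b -> {perm 'rV['F_2]_m}).
Variables (U W1 W2 U' W1' W2' : {vspace Vsp b m}) (vbar vbar' : Vsp b m).
Hypotheses (hb : (1 < b)%N) (hm : (4 <= m)%N) (g0 : parmap g 0 = 0).
Hypotheses (hdu : forall i, diff_delta_uniform (fun x => g i x) 4)
  (hnh : forall i, nhat (fun x => g i x) = 0%N).
Hypotheses (dU : \dim U = (m * b).-1) (W1U : (W1 <= U)%VS) (W2U : (W2 <= U)%VS)
  (vU : vbar \notin U).
Hypotheses (dU' : \dim U' = (m * b).-1) (W1U' : (W1' <= U')%VS) (W2U' : (W2' <= U')%VS)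
  (vU' : vbar' \notin U').
Hypotheses (hJ : Jset U :&: Jset U' = set0)
  (hmap : maps_onto (parmap g) (LApart U W1 W2 vbar) (LApart U' W1' W2' vbar')).

Local Notation V := (Vsp b m).
Local Notation gam := (parmap g).
Local Notation gin := (parmap (fun i => (g i)^-1%g)).
Local Notation ii := (@inj_blk b m).

Lemma n0 : (0 < m * b)%N.
Proof. by rewrite muln_gt0; apply/andP; split; [apply: leq_trans hm | apply: ltnW]. Qed.

Lemma gi0 i : g i 0 = 0.
Proof. by have := congr1 (fun f : V => f i) g0; rewrite /= !ffunE. Qed.

Lemma gini0 i : (g i)^-1%g 0 = 0.
Proof. by rewrite -{1}(gi0 i) permK. Qed.

Lemma gamK x : gin (gam x) = x.
Proof. by apply/ffunP => k; rewrite !ffunE permK. Qed.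

Lemma ginK y : gam (gin y) = y.
Proof. by apply/ffunP => k; rewrite !ffunE permKV. Qed.

Lemma gam_inj : injective (parmap g).
Proof. exact: can_inj gamK. Qed.

Lemma iiE j v k : ii j v k = if k == j then v else 0.
Proof. by rewrite ffunE. Qed.

Lemma gam_ii j v : gam (ii j v) = ii j (g j v).
Proof. by apply/ffunP => k; rewrite !ffunE; case: eqP => [->|] //; rewrite gi0. Qed.

Lemma gin_ii j v : gin (ii j v) = ii j ((g j)^-1%g v).
Proof. by apply/ffunP => k; rewrite !ffunE; case: eqP => [->|] //; rewrite gini0. Qed.

Lemma iiD j s t : ii j (s + t) = ii j s + ii j t.
Proof. by apply/ffunP => k; rewrite !ffunE; case: eqP => //; rewrite addr0. Qed.

Lemma ii0 j : ii j 0 = 0.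
Proof. by apply/ffunP => k; rewrite !ffunE; case: eqP. Qed.

Lemma decomp (x : V) : x = \sum_j ii j (x j).
Proof.
apply/ffunP => k; rewrite sum_ffunE (bigD1 k) //= big1 ?addr0 ?ffunE ?eqxx //.
by move=> j jk; rewrite ffunE eq_sym (negbTE jk).
Qed.

Lemma notJ {W : {vspace V}} {i} : i \notin Jset W -> forall t, ii i t \in W.
Proof. by rewrite inE negb_exists => /forallP h t; have := h t; rewrite negbK. Qed.

Lemma inJ {W : {vspace V}} {i} : i \in Jset W -> exists t, ii i t \notin W.
Proof. by rewrite inE => /existsP. Qed.

Lemma J'J {i} : i \in Jset U' -> i \notin Jset U.
Proof.
move=> iJ'; apply/negP => iJ.
have : i \in Jset U :&: Jset U' by rewrite inE iJ iJ'.
by rewrite hJ inE.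
Qed.


Lemma sg x y : (x + y \notin U) = (x \notin U) (+) (y \notin U).
Proof. exact: (@sgD _ _ U x y n0 dU). Qed.

Lemma sg' x y : (x + y \notin U') = (x \notin U') (+) (y \notin U').
Proof. exact: (@sgD _ _ U' x y n0 dU'). Qed.

Lemma LAP X : reflect (exists c, X = coset (Wsel W1 W2 (c \notin U)) c)
  (X \in LApart U W1 W2 vbar).
Proof. exact: (@LApartP _ _ _ _ _ _ X n0 dU vU). Qed.

Lemma LAP' X : reflect (exists c, X = coset (Wsel W1' W2' (c \notin U')) c)
  (X \in LApart U' W1' W2' vbar').
Proof. exact: (@LApartP _ _ _ _ _ _ X n0 dU' vU'). Qed.

Lemma WselU beta a : a \in Wsel W1 W2 beta -> a \in U.
Proof. by case: beta => /=; apply: subvP. Qed.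

Lemma WselU' beta a : a \in Wsel W1' W2' beta -> a \in U'.
Proof. by case: beta => /=; apply: subvP. Qed.

Lemma blockB X y : X \in LApart U' W1' W2' vbar' -> y \in X ->
  X = coset (Wsel W1' W2' (y \notin U')) y.
Proof.
case/LAP' => c -> yX.
have e : (y \notin U') = (c \notin U').
  move: yX; rewrite mem_coset => /WselU' h.
  have := sg' y c; rewrite h => /esym.
  by case: (y \notin U'); case: (c \notin U').
by rewrite e -(coset_eq yX).
Qed.

Lemma blockXB x : gam @: coset (Wsel W1 W2 (x \notin U)) x =
  coset (Wsel W1' W2' (gam x \notin U')) (gam x).
Proof.
set X := coset _ x.
have XA : X \in LApart U W1 W2 vbar by apply/LAP; exists x.
have XB : gam @: X \in LApart U' W1' W2' vbar'.
  by rewrite -hmap; apply/imsetP; exists X.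
have xX : x \in X by rewrite mem_coset addxx mem0v.
exact: blockB XB (imset_f _ xX).
Qed.

Lemma Efw {x a} : a \in Wsel W1 W2 (x \notin U) ->
  gam (x + a) + gam x \in Wsel W1' W2' (gam x \notin U').
Proof.
move=> aW.
have : gam (x + a) \in gam @: coset (Wsel W1 W2 (x \notin U)) x.
  by apply: imset_f; rewrite mem_coset (addrC x) addxK.
by rewrite blockXB mem_coset.
Qed.

Lemma Erv {x a'} : a' \in Wsel W1' W2' (gam x \notin U') ->
  gin (gam x + a') + x \in Wsel W1 W2 (x \notin U).
Proof.
move=> aW.
have : gam x + a' \in coset (Wsel W1' W2' (gam x \notin U')) (gam x).
  by rewrite mem_coset (addrC (gam x)) addxK.
rewrite -blockXB => /imsetP [z zX ->].
by rewrite gamK -mem_coset.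
Qed.


Lemma exJ {W : {vspace V}} {v} : v \notin W -> exists j t, (j \in Jset W) /\ ii j t \notin W.
Proof.
move=> vW; case: (pickP (mem (Jset W))) => [j jJ | none].
  by have [t tW] := inJ jJ; exists j, t.
case/negP: vW; rewrite (decomp v); apply: memv_suml => j _.
by apply: notJ; apply/negbT; apply: none.
Qed.

Lemma dshift x a i s :
  gam (x + ii i s + a) + gam (x + ii i s) =
  (gam (x + a) + gam x) + ii i (fder (fun t => g i t) (a i) (x i + s)
                                + fder (fun t => g i t) (a i) (x i)).
Proof.
apply/ffunP => k; rewrite !ffunE /fder; case: eqP => [->|_].
  by rewrite addrCA addxx addr0.
by rewrite !addr0.
Qed.

Lemma shift_in {W : {vspace V}} {x a} i s :
  a \in Wsel W1 W2 (x \notin U) -> a \in Wsel W1 W2 (x + ii i s \notin U) ->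
  (forall beta y, y \in Wsel W1' W2' beta -> y \in W) ->
  (forall y z, y \in W -> z \in W -> y + z \in W) ->
  ii i (fder (fun t => g i t) (a i) (x i + s) + fder (fun t => g i t) (a i) (x i)) \in W.
Proof.
move=> a1 a2 sub WD.
have e1 := sub _ _ (Efw a1).
have e2 := sub _ _ (Efw a2).
rewrite dshift in e2.
by rewrite -(addKx (gam (x + a) + gam x) (ii i _)) WD.
Qed.

Lemma noJ' i x a : i \in Jset U' -> a \in Wsel W1 W2 (x \notin U) -> a i = 0.
Proof.
move=> iJ' aW; apply/eqP; apply/negPn/negP => ai0.
have iJ := J'J iJ'; have hU := notJ iJ.
have [w wU'] := inJ iJ'.
pose Z := [set z | ii i z \in U'].
apply: (@NH _ (fun t => g i t) Z w (a i) (x i) _ _ _ ai0 _ (hnh i)).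
- by rewrite inE ii0 mem0v.
- by move=> y z; rewrite !inE iiD; apply: memvD.
- by rewrite inE.
move=> t; have -> : t = x i + (t + x i) by rewrite addrC addxK.
rewrite /Z inE; apply: (shift_in _ _ aW).
- by rewrite sg (hU _) /= addbF.
- by move=> beta y; apply: WselU'.
- by move=> y z; apply: memvD.
Qed.


Lemma gam0 : gam 0 = 0. Proof. exact: g0. Qed.

Lemma nU0 : (0 \notin U) = false. Proof. by rewrite mem0v. Qed.
Lemma nU0' : (0 \notin U') = false. Proof. by rewrite mem0v. Qed.

Lemma S1f {a} : a \in W1 -> gam a \in W1'.
Proof.
move=> aW; have : a \in Wsel W1 W2 (0 \notin U) by rewrite nU0.
by move/Efw; rewrite gam0 nU0' add0r addr0.
Qed.

Lemma S1r {a'} : a' \in W1' -> gin a' \in W1.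
Proof.
move=> aW; have : a' \in Wsel W1' W2' (gam 0 \notin U') by rewrite gam0 nU0'.
by move/Erv; rewrite gam0 nU0 add0r addr0.
Qed.

Lemma gam_shift0 j (s : 'rV['F_2]_m) (a : V) : a j = 0 -> gam (ii j s + a) + gam (ii j s) = gam a.
Proof.
move=> aj; apply/ffunP => k; rewrite !ffunE; case: eqP => [->|_].
  by rewrite aj addr0 addxx gi0.
by rewrite add0r gi0 addr0.
Qed.

Lemma W'eq a' : (a' \in W1') = (a' \in W2').
Proof.
have [j [t [jJ' tU']]] := exJ vU'.
pose x0 := ii j ((g j)^-1%g t).
have sx0 : (x0 \notin U) = false by rewrite (notJ (J'J jJ')).
have gx0 : gam x0 = ii j t by rewrite gam_ii permKV.
have sgx0 : (gam x0 \notin U') = true by rewrite gx0.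
have aj0 : forall a, a \in W1 -> a j = 0.
  by move=> a aW; apply: (noJ' _ 0 _ jJ'); rewrite nU0.
apply/idP/idP => h.
  have aW := S1r h.
  have : gin a' \in Wsel W1 W2 (x0 \notin U) by rewrite sx0.
  move/Efw; rewrite sgx0 /= gam_shift0 ?ginK //; exact: aj0.
have : a' \in Wsel W1' W2' (gam x0 \notin U') by rewrite sgx0.
move/Erv; rewrite sx0 /= => aW.
have := S1f aW.
rewrite -(gam_shift0 _ ((g j)^-1%g t) _ (aj0 _ aW)) -/x0 (addrC _ x0) addKx ginK.
by rewrite (addrC (gam x0)) addxK.
Qed.


Lemma Wsel'E beta a' : (a' \in Wsel W1' W2' beta) = (a' \in W1').
Proof. by case: beta => //=; rewrite W'eq. Qed.

Lemma gam_fd i t c : gam (ii i t + ii i c) + gam (ii i t) =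
  ii i (fder (fun t => g i t) c t).
Proof. by rewrite -iiD !gam_ii -iiD /fder. Qed.

Lemma card_rV : #|[set: 'rV['F_2]_m]| = (2 ^ m)%N.
Proof. by rewrite cardsT card_mx card_Fp // mul1n. Qed.

Lemma noJ i x a : i \in Jset U -> a \in Wsel W1 W2 (x \notin U) -> a i = 0.
Proof.
move=> iJ aW; apply/eqP; apply/negPn/negP => ai0.
have [e eU] := inJ iJ.
pose h t := ii i t \notin U.
have hD : forall s t, h (s + t) = h s (+) h t by move=> s t; rewrite /h iiD sg.
have he : h e := eU.
pose H := [set t | ~~ h t].
pose Z := [set z | ii i z \in W1'].
pose M1 := [set c | ii i c \in W1].
pose M2 := [set c | ii i c \in W2].
have Z0 : 0 \in Z by rewrite inE ii0 mem0v.
have ZD : forall y z, y \in Z -> z \in Z -> y + z \in Z.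
  by move=> y z; rewrite !inE iiD; apply: memvD.
have cardH : (8 <= #|H|)%N.
  have l1 : (#|H| <= #|~: H|)%N.
    rewrite -(card_imset _ (addIr e)); apply: subset_leq_card; apply/subsetP => y.
    case/imsetP => t; rewrite !inE => ht ->; by rewrite hD (negbTE ht) he.
  have l2 : (#|~: H| <= #|H|)%N.
    rewrite -(card_imset _ (addIr e)); apply: subset_leq_card; apply/subsetP => y.
    case/imsetP => t; rewrite !inE => ht ->; by rewrite hD negbK in ht *; rewrite ht he.
  have := cardsC H; rewrite -cardsT card_rV => e2.
  apply: (ar1 l1 l2 e2); exact: leq_pexp2l.


have [z0 z0Z z00] : exists2 z0, z0 \in Z & z0 != 0.
  case: (pickP (fun z => (z \in Z) && (z != 0))) => [z0 /andP [] | none].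
    by exists z0.
  exfalso.
  have sx : forall s, s \in H -> a \in Wsel W1 W2 (x + ii i s \notin U).
    by move=> s; rewrite inE sg => hs; rewrite -/(h s) (negbTE hs) addbF.
  have eq1 : forall s, s \in H ->
      fder (fun t => g i t) (a i) (x i + s) = fder (fun t => g i t) (a i) (x i).
    move=> s sH.
    have : ii i (fder (fun t => g i t) (a i) (x i + s) + fder (fun t => g i t) (a i) (x i))
        \in W1'.
      apply: (shift_in _ _ aW (sx _ sH)).
      - by move=> beta y; rewrite Wsel'E.
      - by move=> y z; apply: memvD.
    move=> hz; have := none (fder (fun t => g i t) (a i) (x i + s)
                             + fder (fun t => g i t) (a i) (x i)).
    rewrite inE hz /= => /negbFE /eqP h0.
    by rewrite -[LHS]addr0 -h0 addKx.
  have := DU (fder (fun t => g i t) (a i) (x i)) ai0 (hdu i).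
  have : (#|H| <= #|[set t | fder (fun t => g i t) (a i) t ==
                             fder (fun t => g i t) (a i) (x i)]|)%N.
    rewrite -(card_imset _ (addrI (x i))); apply: subset_leq_card; apply/subsetP => y.
    by case/imsetP => s sH ->; rewrite inE eq1.
  exact: ar2.
pose c0 := (g i)^-1%g z0.
have c0M1 : ii i c0 \in W1.
  by have := S1r (a' := ii i z0); rewrite gin_ii -/c0; apply; rewrite inE in z0Z.
have c00 : c0 != 0.
  by apply/eqP => h0; move: z00; rewrite -(permKV (g i) z0) -/c0 h0 gi0 eqxx.
have fdW : forall t c, ii i c \in Wsel W1 W2 (ii i t \notin U) ->
    fder (fun t => g i t) c t \in Z.
  move=> t c hc; rewrite inE -gam_fd.
  by have := Efw hc; rewrite Wsel'E.
have fd0 : forall t c, c != 0 -> fder (fun t => g i t) c t != 0.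
  move=> t c c0n; apply/negP => /eqP h0.
  have e1 : g i (t + c) = g i t.
    by rewrite -[LHS]addr0 -h0 /fder addKx.
  have e2 : t + c = t := perm_inj e1.
  have : c = 0 by rewrite -(addKx t c) e2 addxx.
  by move/eqP; rewrite (negbTE c0n).
have M1H : forall c, c \in M1 -> c \in H.
  by move=> c; rewrite !inE => /(subvP W1U); rewrite /h => ->.
have M2H : forall c, c \in M2 -> c \in H.
  by move=> c; rewrite !inE => /(subvP W2U); rewrite /h => ->.
have cnt : (#|H| <= #|Z :\ 0%R| * 4)%N.
  have mapH : forall t, t \in H -> fder (fun t => g i t) c0 t \in Z :\ 0.
    move=> t tH; rewrite in_setD1 fd0 //=; apply: fdW.
    move: tH; rewrite inE => /negbTE; rewrite /h => ->.
    exact: c0M1.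
  rewrite -sum1_card (partition_big (fun t => fder (fun t => g i t) c0 t) (mem (Z :\ 0)))
    //= -sum_nat_const.
  apply: leq_sum => z _.
  apply: leq_trans (DU z c00 (hdu i)).
  rewrite sum1dep_card; apply: subset_leq_card; apply/subsetP => t.
  by rewrite !inE => /andP [].
have ZM1 : (#|Z| <= #|M1|)%N.
  rewrite -(card_imset _ (@perm_inj _ ((g i)^-1%g))); apply: subset_leq_card.
  apply/subsetP => y /imsetP [z zZ ->]; rewrite inE -gin_ii; apply: S1r.
  by rewrite inE in zZ.
have ZM2 : (#|Z| <= #|M2|)%N.
  pose f z := (g i)^-1%g (g i e + z) + e.
  have finj : injective f by move=> z1 z2 /addIr /perm_inj /addrI.
  rewrite -(card_imset _ finj); apply: subset_leq_card.
  apply/subsetP => y /imsetP [z zZ ->]; rewrite inE /f.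
  have : ii i z \in Wsel W1' W2' (gam (ii i e) \notin U') by rewrite Wsel'E; rewrite inE in zZ.
  by move/Erv; rewrite gam_ii -iiD gin_ii -iiD eU.
have [c [cM1 cM2 c_0]] : exists c, [/\ c \in M1, c \in M2 & c != 0].
  case: (pickP (fun c => [&& c \in M1, c \in M2 & c != 0])) => [c /and3P [] | none].
    by move=> *; exists c; split.
  exfalso.
  have inj : {in setX M1 M2 &, injective (fun p : 'rV['F_2]_m * 'rV['F_2]_m => p.1 + p.2)}.
    move=> [a1 b1] [a2 b2]; rewrite !inE /= => /andP [a1M b1M] /andP [a2M b2M] e12.
    have e12' : a1 + a2 = b1 + b2.
      by rewrite -[a1 + a2]addr0 -(addxx b1) addrACA e12 addrACA addxx add0r addrC.
    have h1 : ii i (a1 + a2) \in W1 by rewrite iiD memvD.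
    have h2 : ii i (a1 + a2) \in W2 by rewrite e12' iiD memvD.
    have := none (a1 + a2); rewrite /= !inE h1 h2 /= => /negbFE /eqP h0.
    have ea : a1 = a2 by rewrite -[a1]addr0 -h0 addKx.
    by subst a2; congr (_, _); apply: (addrI a1).
  have : (#|M1| * #|M2| <= #|H|)%N.
    rewrite -cardsX -(card_in_imset inj); apply: subset_leq_card.
    apply/subsetP => y /imsetP [[a1 b1]]; rewrite !inE /= => /andP [a1M b1M] ->.
    have n1 : h a1 = false by rewrite /h (subvP W1U _ a1M).
    have n2 : h b1 = false by rewrite /h (subvP W2U _ b1M).
    by rewrite hD n1 n2.
  move=> hM.
  have cZ : #|Z| = (#|Z :\ 0|).+1 by rewrite (cardsD1 0 Z) Z0.
  apply: (ar3 cnt cardH); rewrite -cZ; apply: leq_trans hM; exact: leq_mul.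
have allZ : forall t, fder (fun t => g i t) c t \in Z.
  move=> t; apply: fdW.
  by case: (ii i t \notin U) => /=; [move: cM2 | move: cM1]; rewrite inE.
have wZ : g i e \notin Z.
  apply/negP; rewrite inE => /S1r; rewrite gin_ii permK => /(subvP W1U) h1.
  by rewrite h1 in eU.
apply: (NH (t0 := 0) Z0 ZD wZ c_0 _ (hnh i)).
by move=> t; apply: ZD.
Qed.

Lemma fullK i x a : i \notin Jset U -> i \notin Jset U' ->
  a \in Wsel W1 W2 (x \notin U) -> a i != 0 ->
  forall t, [/\ ii i t \in W1', ii i t \in W1 & ii i t \in W2].
Proof.
move=> iJ iJ' aW ai0.
pose Z := [set z | ii i z \in W1'].
have Z0 : 0 \in Z by rewrite inE ii0 mem0v.
have ZD : forall y z, y \in Z -> z \in Z -> y + z \in Z.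
  by move=> y z; rewrite !inE iiD; apply: memvD.
have allZ : forall z, ii i z \in W1'.
  move=> w; apply/negPn/negP => wZ.
  have wZ' : w \notin Z by rewrite inE.
  apply: (NH (t0 := x i) Z0 ZD wZ' ai0 _ (hnh i)).
  move=> t; have -> : t = x i + (t + x i) by rewrite addrC addxK.
  rewrite /Z inE; apply: (shift_in _ _ aW).
  - by rewrite sg (notJ iJ) /= addbF.
  - by move=> beta y; rewrite Wsel'E.
  - by move=> y z; apply: memvD.
move=> t; split; first exact: allZ.
  by have := S1r (allZ (g i t)); rewrite gin_ii permK.
have : ii i (g i (vbar i + t) + g i (vbar i)) \in Wsel W1' W2' (gam vbar \notin U').
  by rewrite Wsel'E.
move/Erv; rewrite vU /=.
have -> // : gin (gam vbar + ii i (g i (vbar i + t) + g i (vbar i))) + vbar = ii i t.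
apply/ffunP => k; rewrite !ffunE; case: eqP => [->|_].
  by rewrite addrCA addxx addr0 permK addrC addKx.
by rewrite addr0 permK addxx.
Qed.

Lemma wall0 (y : V) : (y \in wall_set m (set0 : {set 'I_b})) = (y == 0).
Proof.
rewrite inE; apply/forallP/eqP => [h | ->].
  by apply/ffunP => k; have := h k; rewrite inE /= ffunE => /eqP.
by move=> k; rewrite ffunE eqxx implybT.
Qed.

Theorem main_sec : ~ trivial_part (LApart U' W1' W2' vbar') ->
  [/\ [/\ is_wall W1, is_wall W2, is_wall W1' & is_wall W2'],
      [/\ W1 = W1', W1 = W2 & W1 = W2'],
      LApart U W1 W2 vbar = linpart W1 &
      LApart U' W1' W2' vbar' = linpart W1'].
Proof.
move=> ntriv.
pose I := [set i | [exists a : V, (a \in W1) && (a i != 0)]].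
have KK : forall x a i, a \in Wsel W1 W2 (x \notin U) -> a i != 0 ->
    (i \notin Jset U) && (i \notin Jset U').
  move=> x a i aW ai; apply/andP; split; apply/negP => iJ.
    by rewrite (noJ _ _ _ iJ aW) eqxx in ai.
  by rewrite (noJ' _ _ _ iJ aW) eqxx in ai.
have full : forall i, i \in I -> forall t, [/\ ii i t \in W1', ii i t \in W1 & ii i t \in W2].
  move=> i; rewrite inE => /existsP [a /andP [aW ai]].
  have aW' : a \in Wsel W1 W2 (0 \notin U) by rewrite nU0.
  by case/andP: (KK _ _ _ aW' ai) => iJ iJ'; apply: (fullK _ _ _ iJ iJ' aW' ai).
have wallP : forall (P : V -> bool), (forall i t, i \in I -> P (ii i t)) ->
    (forall y z, P y -> P z -> P (y + z)) -> P 0 ->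
    forall x, x \in wall_set m I -> P x.
  move=> P hP PD P0 x; rewrite inE => /forallP hx.
  rewrite (decomp x); elim/big_ind: _ => // i _.
  case iI: (i \in I); first exact: hP.
  by have := hx i; rewrite iI /= => /eqP ->; rewrite ii0.
have memW1 : forall x, (x \in W1) = (x \in wall_set m I).
  move=> x; apply/idP/idP => [xW | ].
    rewrite inE; apply/forallP => i; apply/implyP => iI; apply/negPn/negP => xi.
    by case/negP: iI; rewrite inE; apply/existsP; exists x; rewrite xW xi.
  apply: wallP; [by move=> i t iI; case: (full i iI t) | exact: memvD | exact: mem0v].
have memW2 : forall x, (x \in W2) = (x \in wall_set m I).
  move=> x; apply/idP/idP => [xW | ].
    rewrite inE; apply/forallP => i; apply/implyP => iI; apply/negPn/negP => xi.
    have aW : x \in Wsel W1 W2 (vbar \notin U) by rewrite vU.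
    case/andP: (KK _ _ _ aW xi) => iJ iJ'.
    case: (fullK _ _ _ iJ iJ' aW xi (x i)) => _ h1 _.
    by case/negP: iI; rewrite inE; apply/existsP; exists (ii i (x i)); rewrite h1 ffunE eqxx.
  apply: wallP; [by move=> i t iI; case: (full i iI t) | exact: memvD | exact: mem0v].
have memW1' : forall y, (y \in W1') = (y \in wall_set m I).
  move=> y; apply/idP/idP => [yW | yI].
    have := S1r yW; rewrite memW1 !inE => /forallP h.
    apply/forallP => i; apply/implyP => iI; have := h i; rewrite iI /= ffunE => /eqP.
    by move=> h0; rewrite -(permKV (g i) (y i)) h0 gi0.
  rewrite -(ginK y); apply: S1f; rewrite memW1.
  move: yI; rewrite !inE => /forallP h; apply/forallP => i; apply/implyP => iI.
  by have := h i; rewrite iI /= ffunE => /eqP ->; rewrite gini0.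
have memW2' : forall y, (y \in W2') = (y \in wall_set m I).
  by move=> y; rewrite -W'eq memW1'.
have I0 : I != set0.
  apply/eqP => I0; apply: ntriv; left.
  have cs : forall beta c, coset (Wsel W1' W2' beta) c = [set c].
    move=> beta c; apply/setP => y; rewrite mem_coset Wsel'E memW1' I0 wall0 in_set1.
    by rewrite addr_eq0 oppF2.
  apply/setP => X; apply/LAP'/imsetP => [[c ->] | [c _ ->]]; exists c => //.
have IT : I != setT.
  apply/eqP => IT; move/negP: vU; apply; apply: (subvP W1U).
  by rewrite memW1 IT inE; apply/forallP => i; rewrite in_setT.
have isw : forall W : {vspace V}, (forall x, (x \in W) = (x \in wall_set m I)) -> is_wall W.
  by move=> W hW; exists I; split => //; apply/setP => x; rewrite inE hW.
have e11 : W1 = W1' by apply/vspaceP => x; rewrite memW1 memW1'.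
have e12 : W1 = W2 by apply/vspaceP => x; rewrite memW1 memW2.
have e12' : W1 = W2' by apply/vspaceP => x; rewrite memW1 memW2'.
split.
- by split; apply: isw.
- by [].
- apply/setP => X; apply/LAP/imsetP => [[c ->] | [c _ ->]]; exists c => //.
    by rewrite -e12; case: (c \notin U).
  by rewrite -e12; case: (c \notin U).
- apply/setP => X; apply/LAP'/imsetP => [[c ->] | [c _ ->]]; exists c => //.
    by rewrite -e11 e12' ; case: (c \notin U').
  by rewrite -e11 e12'; case: (c \notin U').
Qed.

End Main.

End Aux.
Import Aux.

Theorem lemma3p17 (b m : nat) (g : 'I_b -> {perm 'rV['F_2]_m})
  (U W1 W2 U' W1' W2' : {vspace Vsp b m}) (vbar vbar' : Vsp b m) :
  (1 < b)%N -> (4 <= m)%N ->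
  parmap g 0 = 0 ->
  (forall i, diff_delta_uniform (fun x => g i x) 4) ->
  (forall i, nhat (fun x => g i x) = 0%N) ->
  \dim U = (m * b).-1 -> (W1 <= U)%VS -> (W2 <= U)%VS -> vbar \notin U ->
  \dim U' = (m * b).-1 -> (W1' <= U')%VS -> (W2' <= U')%VS -> vbar' \notin U' ->
  Jset U :&: Jset U' = set0 ->
  ~ trivial_part (LApart U' W1' W2' vbar') ->
  maps_onto (parmap g) (LApart U W1 W2 vbar) (LApart U' W1' W2' vbar') ->
  [/\ [/\ is_wall W1, is_wall W2, is_wall W1' & is_wall W2'],
      [/\ W1 = W1', W1 = W2 & W1 = W2'],
      LApart U W1 W2 vbar = linpart W1 &
      LApart U' W1' W2' vbar' = linpart W1'].
Proof.
move=> hb hm g0 hdu hnh dU W1U W2U vU dU' W1U' W2U' vU' hJ ntriv hmap.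
exact: (@main_sec _ _ _ _ _ _ _ _ _ _ _ hb hm g0 hdu hnh dU W1U W2U vU dU' W1U' W2U' vU' hJ hmap ntriv).
Qed.
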